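(* Let $h>0$, let $\phi_h(x)=\frac{1}{\sqrt{2\pi h}}e^{-x^2/(2h)}$ for $x\in\mathbb{R}$, and for an integer $C$ let $\tilde\phi_h(x)=\sum_{j\in\mathbb{Z}}\phi_h(x+2\pi j)$ and $\tilde\phi_h^{(C)}(x)=\sum_{|j|\le C}\phi_h(x+2\pi j)$. For points $x_1,\dots,x_n\in[-\pi,\pi]$ and the empirical measure $\nu=\frac1n\sum_{i=1}^n\delta_{x_i}$, set $(\tilde\phi_h*\nu)(x)=\frac1n\sum_{i=1}^n\tilde\phi_h(x-x_i)$ and $(\tilde\phi_h^{(C)}*\nu)(x)=\frac1n\sum_{i=1}^n\tilde\phi_h^{(C)}(x-x_i)$ for $x\in[-\pi,\pi]$. If $2\pi(C-1)\ge\sqrt h$, then $$\sup_{x\in[-\pi,\pi]}\Big|\frac{\partial(\tilde\phi_h*\nu)}{\partial x}(x)-\frac{\partial(\tilde\phi_h^{(C)}*\nu)}{\partial x}(x)\Big|\le\frac1\pi\,\phi_h\big(2\pi(C-1)\big).$$ *)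

(* Defs.v *)
From Stdlib Require Import Reals ZArith List.
From Coquelicot Require Import Coquelicot.
Open Scope R_scope.

Definition phi (h x : R) : R := / sqrt (2 * PI * h) * exp (- x ^ 2 / (2 * h)).

(* Periodized kernel: sum over j in Z of phi_h(x + 2 pi j), written as the
   sum of the series over j >= 0 and over j <= -1. *)
Definition phi_per (h x : R) : R :=
  Series (fun k : nat => phi h (x + 2 * PI * INR k))
  + Series (fun k : nat => phi h (x - 2 * PI * INR (S k))).

(* Truncated periodization: sum over integers j with |j| <= C
   (empty sum, i.e. 0, when C < 0). *)
Definition phi_trunc (h : R) (C : Z) (x : R) : R :=
  if (C <? 0)%Z then 0
  else sum_n (fun k : nat => phi h (x + 2 * PI * IZR (Z.of_nat k - C)))
             (2 * Z.to_nat C).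

Definition conv_emp (K : R -> R) (n : nat) (xs : nat -> R) (x : R) : R :=
  / INR n * sum_n (fun i : nat => K (x - xs i)) (pred n).

(* Main.v *)
Require Import Defs.
From Stdlib Require Import Reals ZArith List Lra Lia Psatz.
From Coquelicot Require Import Coquelicot.
Open Scope R_scope.

Definition dphi (h u : R) : R := - u / h * phi h u.
Definition G (h u : R) : R := u / h * phi h u.

Lemma phi_pos h u : 0 < h -> 0 < phi h u.
Proof.
  intros Hh. unfold phi. apply Rmult_lt_0_compat.
  - apply Rinv_0_lt_compat, sqrt_lt_R0. pose proof PI_RGT_0. nra.
  - apply exp_pos.
Qed.

Lemma phi_even h u : phi h (- u) = phi h u.
Proof. unfold phi. f_equal. f_equal. f_equal. ring. Qed.

Lemma phi_mul h u v : 0 < h ->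
  phi h u = phi h v * exp ((v ^ 2 - u ^ 2) / (2 * h)).
Proof.
  intros Hh. unfold phi. rewrite (Rmult_assoc (/ sqrt _)), <- exp_plus. f_equal. f_equal.
  field. lra.
Qed.

Lemma phi_decr h u v : 0 < h -> 0 <= u <= v -> phi h v <= phi h u.
Proof.
  intros Hh Huv. rewrite (phi_mul h u v Hh).
  assert (0 <= (v ^ 2 - u ^ 2) / (2 * h)).
  { apply Rdiv_le_0_compat; nra. }
  pose proof (exp_ineq1_le ((v ^ 2 - u ^ 2) / (2 * h))).
  pose proof (phi_pos h v Hh). nra.
Qed.

Lemma phi_deriv h u : 0 < h -> is_derive (phi h) u (dphi h u).
Proof.
  intros Hh. unfold phi, dphi. auto_derive.
  - auto.
  - replace (- (u * (u * 1)) * / (2 * h)) with (- u ^ 2 / (2 * h)) by (field; lra).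
    unfold phi. pose proof PI_RGT_0. assert (sqrt (2*PI*h) <> 0) by (apply Rgt_not_eq, sqrt_lt_R0; nra). field; repeat split; lra.
Qed.

Lemma dphi_odd h u : dphi h (- u) = - dphi h u.
Proof. unfold dphi. rewrite phi_even. unfold Rdiv. ring. Qed.

Lemma exp_quad z : 0 <= z -> 1 + z + z ^ 2 / 2 <= exp z.
Proof.
  intros Hz.
  destruct (MVT_gen (fun t => exp t - 1 - t - t ^ 2 / 2) 0 z (fun t => exp t - 1 - t))
    as [c [Hc Heq]].
  - intros x _. auto_derive; auto. field.
  - intros x _. apply continuity_pt_minus. apply continuity_pt_minus.
    apply continuity_pt_minus. apply derivable_continuous_pt, derivable_pt_exp.
    apply continuity_pt_const. intros a b; auto.
    apply derivable_continuous_pt, derivable_pt_id.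
    apply derivable_continuous_pt. apply derivable_pt_div. 
    apply derivable_pt_pow. apply derivable_pt_const. lra.
  - rewrite exp_0 in Heq. pose proof (exp_ineq1_le c). nra.
Qed.

Lemma sqrt_sq h : 0 < h -> sqrt h * sqrt h = h.
Proof. intros; apply sqrt_sqrt; lra. Qed.

Lemma G_mono h u v : 0 < h -> sqrt h <= u <= v -> G h v <= G h u.
Proof.
  intros Hh Huv. unfold G. rewrite (phi_mul h u v Hh).
  set (z := (v ^ 2 - u ^ 2) / (2 * h)).
  pose proof (sqrt_sq h Hh). pose proof (sqrt_pos h).
  assert (Hz : z * (2 * h) = v ^ 2 - u ^ 2) by (unfold z; field; lra).
  pose proof (exp_ineq1_le z). pose proof (phi_pos h v Hh).
  assert (u * u >= h) by nra.
  assert (v <= u * exp z).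
  { assert (u * (1 + z) >= v).
    { assert (2 * h * (u * (1 + z)) >= 2 * h * v); [|nra].
      replace (2 * h * (u * (1 + z))) with (2 * h * u + u * (z * (2 * h))) by ring.
      rewrite Hz. assert (0 <= (v - u) * (u * (v + u) - 2 * h)) by (apply Rmult_le_pos; nra). nra. }
    nra. }
  unfold Rdiv.
  assert (0 < / h) by (apply Rinv_0_lt_compat; lra).
  assert (v * / h <= u * exp z * / h) by (apply Rmult_le_compat_r; lra).
  replace (u * / h * (phi h v * exp z)) with (u * exp z * / h * phi h v) by ring.
  apply Rmult_le_compat_r; lra.
Qed.

Lemma step h u : 0 < h -> u - 2 * PI >= sqrt h ->
  2 * PI * G h u <= phi h (u - 2 * PI) - phi h u.
Proof.
  intros Hh Hu. unfold G. rewrite (phi_mul h (u - 2 * PI) u Hh).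
  set (z := (u ^ 2 - (u - 2 * PI) ^ 2) / (2 * h)).
  pose proof (sqrt_sq h Hh). pose proof (sqrt_pos h). pose proof PI_RGT_0.
  assert (Hz : z * h = 2 * PI * (u - PI)) by (unfold z; field; lra).
  assert (0 <= z). { unfold z. apply Rdiv_le_0_compat; nra. }
  pose proof (exp_quad z H2). pose proof (phi_pos h u Hh).
  assert (Hw : (u - PI) * (u - PI) >= h) by nra.
  assert (2 * PI * (u / h) <= exp z - 1); [|nra].
  assert (2 * PI * u <= h * (z + z ^ 2 / 2)).
  { replace (h * (z + z ^ 2 / 2)) with (z * h + (z * h) * (z * h) / (2 * h)) by (field; lra).
    rewrite Hz.
    assert (2 * PI * PI <= 2 * PI * (u - PI) * (2 * PI * (u - PI)) / (2 * h)); [|lra].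
    apply (Rmult_le_reg_r (2 * h)). lra.
    replace (2 * PI * (u - PI) * (2 * PI * (u - PI)) / (2 * h) * (2 * h)) with
      (2 * PI * (u - PI) * (2 * PI * (u - PI))) by (field; lra).
    assert (PI * PI * (2 * h) <= PI * PI * (2 * ((u - PI) * (u - PI)))); [|nra].
    apply Rmult_le_compat_l; nra. }
  assert (2 * PI * (u / h) <= z + z ^ 2 / 2); [|lra].
  replace (2 * PI * (u / h)) with ((2 * PI * u) / h) by (field; lra).
  apply (Rmult_le_reg_r h). lra. replace (2 * PI * u / h * h) with (2 * PI * u) by (field; lra). lra.
Qed.

Lemma G_nonneg h u : 0 < h -> 0 <= u -> 0 <= G h u.
Proof.
  intros Hh Hu. unfold G. apply Rmult_le_pos. apply Rdiv_le_0_compat; lra.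
  left; apply phi_pos; auto.
Qed.

Lemma tele h v N : 0 < h -> v - 2 * PI >= sqrt h ->
  2 * PI * sum_n (fun k => G h (v + 2 * PI * INR k)) N
  <= phi h (v - 2 * PI) - phi h (v + 2 * PI * INR N).
Proof.
  intros Hh Hv. pose proof PI_RGT_0. pose proof (pos_INR N).
  induction N.
  - rewrite sum_O. simpl INR. replace (v + 2 * PI * 0) with v by ring.
    apply step; auto.
  - rewrite sum_Sn. unfold plus; cbn -[INR sum_n G phi].
    pose proof (pos_INR N).
    assert (IH := IHN H1).
    pose proof (step h (v + 2 * PI * INR (S N)) Hh).
    replace (v + 2 * PI * INR (S N) - 2 * PI) with (v + 2 * PI * INR N) in H2
      by (rewrite S_INR; ring).
    assert (v + 2 * PI * INR N >= sqrt h) by nra.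
    specialize (H2 H3). rewrite Rmult_plus_distr_l. lra.
Qed.

Lemma TL h v : 0 < h -> v - 2 * PI >= sqrt h ->
  ex_series (fun k => G h (v + 2 * PI * INR k)) /\
  Series (fun k => G h (v + 2 * PI * INR k)) <= phi h (v - 2 * PI) / (2 * PI).
Proof.
  intros Hh Hv. pose proof PI_RGT_0. pose proof (sqrt_pos h).
  assert (Hnn : forall k, 0 <= G h (v + 2 * PI * INR k)).
  { intros k. apply G_nonneg; auto. pose proof (pos_INR k). nra. }
  assert (Hb : forall N, sum_n (fun k => G h (v + 2 * PI * INR k)) N <= phi h (v - 2 * PI) / (2 * PI)).
  { intros N. pose proof (tele h v N Hh Hv). pose proof (phi_pos h (v + 2 * PI * INR N) Hh).
    apply (Rmult_le_reg_l (2 * PI)). lra.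
    replace (2 * PI * (phi h (v - 2 * PI) / (2 * PI))) with (phi h (v - 2 * PI)) by (field; lra).
    lra. }
  assert (Hinc : forall n, sum_n (fun k => G h (v + 2 * PI * INR k)) n <= sum_n (fun k => G h (v + 2 * PI * INR k)) (S n)).
  { intros n. rewrite sum_Sn; unfold plus; cbn -[INR sum_n G phi]. specialize (Hnn (S n)); lra. }
  destruct (ex_finite_lim_seq_incr (sum_n (fun k => G h (v + 2 * PI * INR k))) _ Hinc Hb) as [l Hl].
  assert (Hs : is_series (fun k => G h (v + 2 * PI * INR k)) l) by exact Hl.
  split. exists l; exact Hs.
  rewrite (is_series_unique _ _ Hs).
  assert (Rbar_le l (phi h (v - 2 * PI) / (2 * PI))).
  { apply (is_lim_seq_le _ _ _ _ Hb Hl). apply is_lim_seq_const. }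
  exact H1.
Qed.

Lemma PI_gt2 : 2 < PI.
Proof. pose proof PI2_1. lra. Qed.

Lemma dphi_abs h u : 0 < h -> 0 <= u -> Rabs (dphi h u) = G h u.
Proof.
  intros Hh Hu. replace (dphi h u) with (- G h u) by (unfold dphi, G, Rdiv; ring).
  rewrite Rabs_Ropp. apply Rabs_pos_eq. apply G_nonneg; auto.
Qed.

Lemma TB h v : 0 < h -> v - 2 * PI >= sqrt h ->
  ex_series (fun k => dphi h (v + 2 * PI * INR k)) /\
  Rabs (Series (fun k => dphi h (v + 2 * PI * INR k))) <= phi h (v - 2 * PI) / (2 * PI).
Proof.
  intros Hh Hv. destruct (TL h v Hh Hv) as [Hex Hle].
  pose proof PI_RGT_0. pose proof (sqrt_pos h).
  assert (Ha : forall k, Rabs (dphi h (v + 2 * PI * INR k)) = G h (v + 2 * PI * INR k)).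
  { intros k. apply dphi_abs; auto. pose proof (pos_INR k). nra. }
  assert (Hex' : ex_series (fun k => Rabs (dphi h (v + 2 * PI * INR k)))).
  { apply (ex_series_ext (fun k => G h (v + 2 * PI * INR k))); auto. }
  split.
  - apply ex_series_Rabs. exact Hex'.
  - eapply Rle_trans. apply Series_Rabs; auto.
    apply Rle_trans with (Series (fun k => G h (v + 2 * PI * INR k))); auto.
    right. apply Series_ext. intros k. apply Ha.
Qed.

Lemma arch (A : R) : exists K : nat, A <= INR K.
Proof. destruct (INR_unbounded A) as [K HK]. exists K. lra. Qed.

Lemma far h y : 0 < h -> exists K : nat, (y + 2 * PI * INR K) - 2 * PI >= sqrt h.
Proof.
  intros Hh. destruct (arch (sqrt h + 2 * PI + Rabs y)) as [K HK]. exists K.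
  pose proof PI_gt2. pose proof (sqrt_pos h). pose proof (Rabs_pos y).
  pose proof (Rle_abs (- y)). rewrite Rabs_Ropp in H2. nra.
Qed.

Lemma shift_ex (f : R -> R) y (K : nat) :
  ex_series (fun k => f ((y + 2 * PI * INR K) + 2 * PI * INR k)) ->
  ex_series (fun k => f (y + 2 * PI * INR k)).
Proof.
  intros H. apply (ex_series_incr_n _ K).
  apply (ex_series_ext (fun k => f ((y + 2 * PI * INR K) + 2 * PI * INR k))); auto.
  intros k. f_equal. rewrite plus_INR. ring.
Qed.

Lemma ex_dphi h y : 0 < h -> ex_series (fun k => dphi h (y + 2 * PI * INR k)).
Proof.
  intros Hh. destruct (far h y Hh) as [K HK]. apply (shift_ex _ _ K).
  apply (TB h _ Hh HK).
Qed.

Lemma phi_le_G h u : 0 < h -> sqrt h <= u -> phi h u <= sqrt h * G h u.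
Proof.
  intros Hh Hu. unfold G. pose proof (sqrt_sq h Hh). pose proof (phi_pos h u Hh). pose proof (sqrt_pos h).
  assert (sqrt h * (u / h) >= 1).
  { replace (sqrt h * (u / h)) with (sqrt h * u / h) by (field; lra).
    apply Rle_ge. apply (Rmult_le_reg_r h). lra.
    replace (sqrt h * u / h * h) with (sqrt h * u) by (field; lra). nra. }
  nra.
Qed.

Lemma ex_phi h y : 0 < h -> ex_series (fun k => phi h (y + 2 * PI * INR k)).
Proof.
  intros Hh. destruct (far h y Hh) as [K HK]. apply (shift_ex _ _ K).
  destruct (TL h _ Hh HK) as [Hex _].
  apply (@ex_series_le _ R_CompleteNormedModule _ (fun k => sqrt h * G h ((y + 2 * PI * INR K) + 2 * PI * INR k))).
  - intros k. change (norm ?x) with (Rabs x). rewrite Rabs_pos_eq by (left; apply phi_pos; auto).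
    apply phi_le_G; auto. pose proof (pos_INR k). pose proof PI_RGT_0. nra.
  - destruct Hex as [l Hl]. exists (sqrt h * l). apply (is_series_scal_l (sqrt h)) in Hl. exact Hl.
Qed.

Lemma is_derive_shift (F F' : R -> R) a z :
  (forall w, is_derive F w (F' w)) -> is_derive (fun t => F (t + a)) z (F' (z + a)).
Proof.
  intros HF.
  assert (Hg : is_derive (fun t : R => t + a) z 1) by (auto_derive; auto; ring).
  pose proof (is_derive_comp F (fun t => t + a) z (F' (z + a)) 1 (HF _) Hg) as H.
  change (scal 1 (F' (z + a))) with (1 * F' (z + a)) in H. rewrite Rmult_1_l in H. exact H.
Qed.

Lemma sum_deriv (F F' : R -> R) (s : nat -> R) m z :
  (forall w, is_derive F w (F' w)) ->
  is_derive (fun t => sum_n (fun k => F (t + s k)) m) z (sum_n (fun k => F' (z + s k)) m).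
Proof.
  intros HF. induction m.
  - rewrite sum_O. apply (is_derive_ext (fun t => F (t + s 0%nat))).
    + intros t. rewrite sum_O. reflexivity.
    + apply is_derive_shift; auto.
  - rewrite sum_Sn.
    apply (is_derive_ext (fun t => sum_n (fun k => F (t + s k)) m + F (t + s (S m)))).
    + intros t. rewrite sum_Sn. reflexivity.
    + apply (is_derive_plus (fun t => sum_n (fun k => F (t + s k)) m) (fun t => F (t + s (S m)))); auto.
      apply is_derive_shift; auto.
Qed.

Definition P h z := Series (fun k => phi h (z + 2 * PI * INR k)).
Definition DP h z := Series (fun k => dphi h (z + 2 * PI * INR k)).

Lemma phi_exp h u : 0 < h -> phi h u * exp (u ^ 2 / (2 * h)) = / sqrt (2 * PI * h).
Proof.
  intros Hh. unfold phi. rewrite Rmult_assoc, <- exp_plus.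
  replace (- u ^ 2 / (2 * h) + u ^ 2 / (2 * h)) with 0 by (field; lra).
  rewrite exp_0. ring.
Qed.

Lemma phi_small h y0 eps : 0 < h -> 0 < eps ->
  exists N : nat, forall n, (N <= n)%nat -> phi h (y0 + 2 * PI * INR n) < eps.
Proof.
  intros Hh He. set (A := / sqrt (2 * PI * h)).
  assert (HA : 0 < A).
  { unfold A. apply Rinv_0_lt_compat, sqrt_lt_R0. pose proof PI_RGT_0. nra. }
  set (M := 1 + 2 * h * A / eps).
  assert (HM : 2 * h * A / eps >= 0) by (apply Rle_ge, Rdiv_le_0_compat; nra).
  destruct (arch (M + Rabs y0)) as [N HN]. exists N. intros n Hn.
  apply le_INR in Hn. pose proof PI_gt2. pose proof (Rabs_pos y0).
  pose proof (Rle_abs (- y0)). rewrite Rabs_Ropp in H1.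
  set (u := y0 + 2 * PI * INR n).
  assert (Hu : u >= M). { assert (INR n <= 2 * PI * INR n) by (pose proof (pos_INR n); nra). unfold u. lra. }
  pose proof (phi_exp h u Hh). fold A in H2.
  pose proof (exp_ineq1_le (u ^ 2 / (2 * h))). pose proof (phi_pos h u Hh).
  assert (phi h u * (u ^ 2 / (2 * h)) <= A) by nra.
  assert (phi h u * u <= 2 * h * A).
  { assert (phi h u * u * u <= 2 * h * A * u).
    { replace (phi h u * u * u) with (2 * h * (phi h u * (u ^ 2 / (2 * h)))) by (field; lra).
      assert (u >= 1) by (unfold M in Hu; lra).
      assert (0 <= 2 * h * A * (u - 1)) by (apply Rmult_le_pos; nra).
      assert (2 * h * (phi h u * (u ^ 2 / (2 * h))) <= 2 * h * A) by (apply Rmult_le_compat_l; lra).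
      lra. }
    assert (u >= 1) by (unfold M in Hu; lra).
    assert (0 <= phi h u * u) by nra.
    apply (Rmult_le_reg_r u); [lra|]. nra. }
  assert (2 * h * A < eps * u).
  { assert (2 * h * A / eps < u) by (unfold M in Hu; lra).
    apply (Rmult_lt_reg_r (/ eps)). apply Rinv_0_lt_compat; lra.
    replace (eps * u * / eps) with u by (field; lra). exact H7. }
  assert (u >= 1) by (unfold M in Hu; lra). apply (Rmult_lt_reg_r u); [lra|]. lra.
Qed.

Lemma P_deriv h y : 0 < h -> is_derive (P h) y (DP h y).
Proof.
  intros Hh. apply is_derive_Reals.
  pose proof PI_gt2 as Hpi.
  set (r := {| pos := 1; cond_pos := Rlt_0_1 |}).
  apply (CVU_derivable (fun n x => sum_f_R0 (fun k => phi h (x + 2 * PI * INR k)) n)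
           (fun n x => sum_f_R0 (fun k => dphi h (x + 2 * PI * INR k)) n) (P h) (DP h) y r).
  - intros eps Heps. set (y0 := y - 1).
    destruct (far h y0 Hh) as [K HK].
    destruct (phi_small h y0 (2 * PI * eps) Hh ltac:(nra)) as [N1 HN1].
    exists (K + N1)%nat. intros n x Hn Hx.
    unfold Boule in Hx. simpl in Hx. 
    assert (Hxy : y0 < x) by (unfold y0; pose proof (Rle_abs (- (x - y))); rewrite Rabs_Ropp in H; lra).
    unfold DP. rewrite (Series_incr_n _ (S n)) by (lia || apply ex_dphi; auto).
    simpl pred.
    replace (sum_f_R0 (fun k => dphi h (x + 2 * PI * INR k)) n +
             Series (fun k => dphi h (x + 2 * PI * INR (S n + k))) -
             sum_f_R0 (fun k => dphi h (x + 2 * PI * INR k)) n)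
      with (Series (fun k => dphi h (x + 2 * PI * INR (S n + k)))) by ring.
    set (v := y0 + 2 * PI * INR (S n)).
    assert (HKn : INR K <= INR n) by (apply le_INR; lia).
    assert (Hv : v - 2 * PI >= sqrt h).
    { unfold v. rewrite S_INR. nra. }
    destruct (TL h v Hh Hv) as [HexG HleG].
    assert (Hpt : forall k, Rabs (dphi h (x + 2 * PI * INR (S n + k))) <= G h (v + 2 * PI * INR k)).
    { intros k. pose proof (pos_INR k). pose proof (sqrt_pos h).
      assert (v + 2 * PI * INR k <= x + 2 * PI * INR (S n + k)).
      { unfold v. rewrite plus_INR. lra. }
      rewrite dphi_abs by (auto; nra). apply G_mono; auto. nra. }
    assert (Hex : ex_series (fun k => Rabs (dphi h (x + 2 * PI * INR (S n + k))))).
    { apply (@ex_series_le _ R_CompleteNormedModule _ (fun k => G h (v + 2 * PI * INR k))); auto.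
      intros k. change (norm ?z) with (Rabs z). rewrite Rabs_Rabsolu. auto. }
    eapply Rle_lt_trans. apply Series_Rabs; auto.
    eapply Rle_lt_trans. apply (Series_le _ (fun k => G h (v + 2 * PI * INR k))); auto.
    { intros k. split; [apply Rabs_pos| auto]. }
    eapply Rle_lt_trans. exact HleG.
    replace (v - 2 * PI) with (y0 + 2 * PI * INR n) by (unfold v; rewrite S_INR; ring).
    assert (phi h (y0 + 2 * PI * INR n) < 2 * PI * eps) by (apply HN1; lia).
    apply (Rmult_lt_reg_l (2 * PI)). lra.
    replace (2 * PI * (phi h (y0 + 2 * PI * INR n) / (2 * PI))) with (phi h (y0 + 2 * PI * INR n)) by (field; lra).
    lra.
  - intros x _. apply is_series_Reals. apply Series_correct. apply ex_phi; auto.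
  - intros n x _. apply is_derive_Reals.
    apply (is_derive_ext (fun t => sum_n (fun k => phi h (t + 2 * PI * INR k)) n)).
    + intros t. apply sum_n_Reals.
    + rewrite <- sum_n_Reals. apply (sum_deriv (phi h) (dphi h) (fun k => 2 * PI * INR k)).
      intros w; apply phi_deriv; auto.
  - unfold Boule. simpl. rewrite Rminus_diag, Rabs_R0. lra.
Qed.

Lemma sum_n_Sl (u : nat -> R) m : sum_n u (S m) = u 0%nat + sum_n (fun k => u (S k)) m.
Proof.
  induction m.
  - rewrite sum_Sn, !sum_O. reflexivity.
  - rewrite sum_Sn, IHm, sum_Sn. unfold plus; simpl. ring.
Qed.

Lemma T_rec (f : R -> R) y c :
  sum_n (fun k => f (y + 2 * PI * (INR k - INR c))) (2 * c) =
  sum_n (fun k => f (y + 2 * PI * INR k)) c + sum_n (fun k => f (y - 2 * PI * INR (S k))) c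
  - f (y - 2 * PI * INR (S c)).
Proof.
  induction c.
  - simpl (2 * 0)%nat. rewrite !sum_O. simpl INR.
    replace (y + 2 * PI * (0 - 0)) with (y + 2 * PI * 0) by ring. lra.
  - replace (2 * S c)%nat with (S (S (2 * c))) by lia.
    rewrite sum_n_Sl.
    rewrite (sum_n_ext (fun k => f (y + 2 * PI * (INR (S k) - INR (S c))))
                       (fun k => f (y + 2 * PI * (INR k - INR c)))).
    2: { intros k. f_equal. rewrite !S_INR. ring. }
    rewrite sum_Sn, IHc. rewrite (sum_Sn (fun k => f (y + 2 * PI * INR k))).
    rewrite (sum_Sn (fun k => f (y - 2 * PI * INR (S k)))). unfold plus; cbn -[INR sum_n].
    replace (y + 2 * PI * (INR 0 - INR (S c))) with (y - 2 * PI * INR (S c)) by (simpl INR; ring).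
    replace (INR (S (c + (c + 0))) - INR c) with (INR (S c)) by (rewrite !S_INR, !plus_INR; simpl INR; ring).
    lra.
Qed.

Lemma comb (f : R -> R) y c :
  ex_series (fun k => f (y + 2 * PI * INR k)) ->
  ex_series (fun k => f (y - 2 * PI * INR (S k))) ->
  Series (fun k => f (y + 2 * PI * INR k)) + Series (fun k => f (y - 2 * PI * INR (S k)))
  - sum_n (fun k => f (y + 2 * PI * (INR k - INR c))) (2 * c)
  = Series (fun k => f (y + 2 * PI * INR (S c + k))) + Series (fun k => f (y - 2 * PI * INR (S (c + k)))).
Proof.
  intros Ha Hb. rewrite T_rec.
  rewrite (Series_incr_n (fun k => f (y + 2 * PI * INR k)) (S c)) by (auto; lia).
  rewrite (Series_incr_n (fun k => f (y - 2 * PI * INR (S k))) (S c)) by (auto; lia).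
  simpl pred. rewrite <- !sum_n_Reals.
  rewrite (Series_incr_1 (fun k => f (y - 2 * PI * INR (S (c + k))))).
  2: { apply (ex_series_incr_n (fun k => f (y - 2 * PI * INR (S k))) c). auto. }
  rewrite (Series_ext (fun k => f (y - 2 * PI * INR (S (c + S k))))
                      (fun k => f (y - 2 * PI * INR (S (S c + k))))).
  2: { intros k. do 4 f_equal. lia. }
  rewrite Nat.add_0_r. ring.
Qed.

Lemma tail_bd h c v : 0 < h -> 2 * PI * (INR c - 1) >= sqrt h ->
  v >= 2 * PI * INR c ->
  Rabs (Series (fun k => dphi h (v + 2 * PI * INR k))) <= phi h (2 * PI * (INR c - 1)) / (2 * PI).
Proof.
  intros Hh Hc Hv. pose proof PI_RGT_0. pose proof (sqrt_pos h).
  assert (Hv2 : v - 2 * PI >= sqrt h) by lra.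
  destruct (TB h v Hh Hv2) as [_ Hb]. eapply Rle_trans. exact Hb.
  unfold Rdiv. apply Rmult_le_compat_r. left; apply Rinv_0_lt_compat; lra.
  apply phi_decr; auto. lra.
Qed.

Lemma PW h c y : 0 < h -> 2 * PI * (INR c - 1) >= sqrt h -> - (2 * PI) <= y <= 2 * PI ->
  Rabs ((DP h y - DP h (2 * PI - y))
        - sum_n (fun k => dphi h (y + 2 * PI * (INR k - INR c))) (2 * c))
  <= / PI * phi h (2 * PI * (INR c - 1)).
Proof.
  intros Hh Hc Hy. pose proof PI_RGT_0.
  assert (Hneg : forall z, DP h (2 * PI - z) = - Series (fun k => dphi h (z - 2 * PI * INR (S k)))).
  { intros z. unfold DP.
    rewrite (Series_ext _ (fun k => - dphi h (z - 2 * PI * INR (S k)))).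
    2: { intros k. rewrite <- dphi_odd. f_equal. rewrite S_INR. ring. }
    rewrite Series_opp. reflexivity. }
  rewrite Hneg. unfold DP.
  assert (Hb : ex_series (fun k => dphi h (y - 2 * PI * INR (S k)))).
  { apply (ex_series_ext (fun k => opp (opp (dphi h (y - 2 * PI * INR (S k)))))).
    { intros k. apply opp_opp. }
    apply (@ex_series_opp R_AbsRing R_NormedModule).
    apply (ex_series_ext (fun k => dphi h (2 * PI - y + 2 * PI * INR k))).
    { intros k. change (opp ?z) with (- z). rewrite <- dphi_odd. f_equal. rewrite S_INR. ring. }
    apply ex_dphi; auto. }
  replace (Series (fun k => dphi h (y + 2 * PI * INR k)) -
           - Series (fun k => dphi h (y - 2 * PI * INR (S k))) -
           sum_n (fun k => dphi h (y + 2 * PI * (INR k - INR c))) (2 * c))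
    with (Series (fun k => dphi h (y + 2 * PI * INR k)) +
           Series (fun k => dphi h (y - 2 * PI * INR (S k))) -
           sum_n (fun k => dphi h (y + 2 * PI * (INR k - INR c))) (2 * c)) by ring.
  rewrite comb by (auto; apply ex_dphi; auto).
  rewrite (Series_ext (fun k => dphi h (y + 2 * PI * INR (S c + k)))
                      (fun k => dphi h ((y + 2 * PI * INR (S c)) + 2 * PI * INR k))).
  2: { intros k. f_equal. rewrite plus_INR. ring. }
  rewrite (Series_ext (fun k => dphi h (y - 2 * PI * INR (S (c + k))))
                      (fun k => - dphi h ((2 * PI * INR (S c) - y) + 2 * PI * INR k))).
  2: { intros k. rewrite <- dphi_odd. f_equal. rewrite S_INR, plus_INR, S_INR. ring. }
  rewrite Series_opp.
  eapply Rle_trans. apply Rabs_triang. rewrite Rabs_Ropp.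
  assert (H1 := tail_bd h c (y + 2 * PI * INR (S c)) Hh Hc ltac:(rewrite S_INR; lra)).
  assert (H2 := tail_bd h c (2 * PI * INR (S c) - y) Hh Hc ltac:(rewrite S_INR; lra)).
  replace (/ PI * phi h (2 * PI * (INR c - 1))) with
    (phi h (2 * PI * (INR c - 1)) / (2 * PI) + phi h (2 * PI * (INR c - 1)) / (2 * PI)) by (field; lra).
  lra.
Qed.

Lemma is_derive_eq (f : R -> R) x l l' : is_derive f x l -> l = l' -> is_derive f x l'.
Proof. intros H E; subst; auto. Qed.

Lemma per_deriv h z : 0 < h -> is_derive (phi_per h) z (DP h z - DP h (2 * PI - z)).
Proof.
  intros Hh.
  apply (is_derive_ext (fun t => P h t + P h (2 * PI - t))).
  - intros t. unfold phi_per, P. f_equal. apply Series_ext. intros k.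
    rewrite <- (phi_even h (t - _)). f_equal. rewrite S_INR. ring.
  - assert (Hg : is_derive (fun t : R => 2 * PI - t) z (-1)) by (auto_derive; auto; ring).
    pose proof (is_derive_comp (P h) (fun t => 2 * PI - t) z _ _ (P_deriv h (2 * PI - z) Hh) Hg) as H2.
    pose proof (is_derive_plus _ _ _ _ _ (P_deriv h z Hh) H2) as H3.
    apply (is_derive_eq _ _ _ _ H3).
    change (DP h z + (-1) * DP h (2 * PI - z) = DP h z - DP h (2 * PI - z)). ring.
Qed.

Lemma conv_deriv (K K' : R -> R) n xs x :
  (forall w, is_derive K w (K' w)) ->
  is_derive (conv_emp K n xs) x (/ INR n * sum_n (fun i => K' (x - xs i)) (pred n)).
Proof.
  intros HK. unfold conv_emp. apply is_derive_scal.
  exact (sum_deriv K K' (fun i => - xs i) (pred n) x HK).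
Qed.

Lemma sum_bd (u v : nat -> R) B m :
  (forall i, (i <= m)%nat -> Rabs (u i - v i) <= B) ->
  Rabs (sum_n u m - sum_n v m) <= INR (S m) * B.
Proof.
  induction m; intros HB.
  - rewrite !sum_O. simpl INR. specialize (HB 0%nat (le_n 0)). lra.
  - rewrite !sum_Sn. unfold plus; cbn -[INR sum_n].
    replace (sum_n u m + u (S m) - (sum_n v m + v (S m))) with
      ((sum_n u m - sum_n v m) + (u (S m) - v (S m))) by ring.
    eapply Rle_trans. apply Rabs_triang.
    rewrite (S_INR (S m)).
    assert (IH := IHm (fun i Hi => HB i ltac:(lia))).
    assert (H1 := HB (S m) (le_n _)). lra.
Qed.

Lemma trunc_eq h c x :
  phi_trunc h (Z.of_nat c) x = sum_n (fun k => phi h (x + 2 * PI * (INR k - INR c))) (2 * c).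
Proof.
  unfold phi_trunc.
  replace (Z.of_nat c <? 0)%Z with false by (symmetry; apply Z.ltb_ge; lia).
  rewrite Nat2Z.id. apply sum_n_ext. intros k. rewrite minus_IZR, <- !INR_IZR_INZ. reflexivity.
Qed.

Theorem theorem10 (h : R) (C : Z) (n : nat) (xs : nat -> R) :
  0 < h ->
  (0 < n)%nat ->
  (forall i : nat, (i < n)%nat -> - PI <= xs i <= PI) ->
  2 * PI * (IZR C - 1) >= sqrt h ->
  forall x : R, - PI <= x <= PI ->
    Rabs (Derive (conv_emp (phi_per h) n xs) x
          - Derive (conv_emp (phi_trunc h C) n xs) x)
    <= / PI * phi h (2 * PI * (IZR C - 1)).
Proof.
  intros Hh Hn Hxs HC x Hx. pose proof PI_RGT_0. pose proof (sqrt_pos h).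
  assert (HC0 : (0 <= C)%Z).
  { destruct (Z_le_gt_dec 0 C) as [|Hlt]; auto.
    apply Z.gt_lt, IZR_lt in Hlt. nra. }
  destruct (Z_of_nat_complete C HC0) as [c ->].
  rewrite <- INR_IZR_INZ in *.
  rewrite (is_derive_unique _ _ _ (conv_deriv _ _ n xs x (fun w => per_deriv h w Hh))).
  assert (HT : forall w, is_derive (phi_trunc h (Z.of_nat c)) w
                 (sum_n (fun k => dphi h (w + 2 * PI * (INR k - INR c))) (2 * c))).
  { intros w. apply (is_derive_ext (fun t => sum_n (fun k => phi h (t + 2 * PI * (INR k - INR c))) (2 * c))).
    - intros t. symmetry. apply trunc_eq.
    - apply (sum_deriv (phi h) (dphi h) (fun k => 2 * PI * (INR k - INR c))).
      intros; apply phi_deriv; auto. }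
  rewrite (is_derive_unique _ _ _ (conv_deriv _ _ n xs x HT)).
  rewrite <- Rmult_minus_distr_l, Rabs_mult.
  assert (Hn' : 0 < INR n) by (apply lt_0_INR; lia).
  rewrite Rabs_pos_eq by (left; apply Rinv_0_lt_compat; auto).
  assert (Hb := sum_bd (fun i => DP h (x - xs i) - DP h (2 * PI - (x - xs i)))
            (fun i => sum_n (fun k => dphi h (x - xs i + 2 * PI * (INR k - INR c))) (2 * c))
            (/ PI * phi h (2 * PI * (INR c - 1))) (pred n)).
  replace (S (pred n)) with n in Hb by lia.
  assert (Hb' : Rabs
        (sum_n (fun i => DP h (x - xs i) - DP h (2 * PI - (x - xs i))) (pred n) -
         sum_n (fun i => sum_n (fun k => dphi h (x - xs i + 2 * PI * (INR k - INR c))) (2 * c)) (pred n))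
        <= INR n * (/ PI * phi h (2 * PI * (INR c - 1)))).
  { apply Hb. intros i Hi. apply PW; auto.
    assert (i < n)%nat by lia. specialize (Hxs i H1). lra. }
  apply (Rmult_le_reg_l (INR n)); auto.
  rewrite <- Rmult_assoc, Rinv_r, Rmult_1_l by lra. exact Hb'.
Qed.
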